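(* Let $X=X_F\uplus X_H$ be a set of $n\ge1$ clocks, $M\in\mathbb{N}$, and let $v_1,v_2$ be valuations with $v_1\sim_M v_2$. Let $x,y$ be clocks such that $-M\le v_1(x),v_1(y)\le M$. Then $\lfloor v_1(x)\rfloor=\lfloor v_2(x)\rfloor$, $\{v_1(x)\}=0$ iff $\{v_2(x)\}=0$, and $\{v_1(x)\}\le\{v_1(y)\}$ iff $\{v_2(x)\}\le\{v_2(y)\}$.
   Context: $X_F$ are future clocks, $X_H$ history clocks. $\overline{\mathbb{R}}=\mathbb{R}\cup\{\pm\infty\}$ with $(+\infty)+\alpha=+\infty$, $(-\infty)+\beta=-\infty$ for $\beta\ne+\infty$, $-(\pm\infty)=\mp\infty$. A valuation $v:X\cup\{0\}\to\overline{\mathbb{R}}$ has $v(0)=0$, $v(x)\in\mathbb{R}_{\ge0}\cup\{+\infty\}$ for $x\in X_H$, $v(x)\in\mathbb{R}_{\le0}\cup\{-\infty\}$ for $x\in X_F$. For $\alpha\in\mathbb{R}$, $\{\alpha\}=\alpha-\lfloor\alpha\rfloor$. For $K\in\mathbb{N}$ and $\alpha,\beta\in\overline{\mathbb{R}}$, $\alpha\sim_K\beta$ iff for all ${\triangleleft}\in\{<,\le\}$ and all $c\in\{-\infty,+\infty\}$ or $c\in\mathbb{Z}$ with $|c|\le K$: $\alpha\triangleleft c\iff\beta\triangleleft c$. For valuations, $v_1\sim_M v_2$ iff (i) $v_1(x)\sim_{nM}v_2(x)$ for all $x\in X$, and (ii) $v_1(x)-v_1(y)\sim_{(n+1)M}v_2(x)-v_2(y)$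 for all $x,y\in X$, where $n=|X|$. *)

(* Defs.v *)
From mathcomp Require Import all_boot all_order all_algebra.
From mathcomp Require Import reals.
Set Implicit Arguments. Unset Strict Implicit. Unset Printing Implicit Defensive.
Import Order.TTheory GRing.Theory Num.Theory.
Local Open Scope ring_scope.

Inductive ext (R : realType) : Type := Fin of R | PInf | NInf.
Arguments PInf {R}. Arguments NInf {R}.

Section Ext.
Variable R : realType.

Definition eadd (a b : ext R) : ext R :=
  match a, b with
  | PInf, _ => PInf
  | _, PInf => PInf
  | NInf, _ => NInf
  | _, NInf => NInf
  | Fin x, Fin y => Fin (x + y)
  end.

Definition eopp (a : ext R) : ext R :=
  match a with Fin x => Fin (- x) | PInf => NInf | NInf => PInf end.

Definition esub (a b : ext R) : ext R := eadd a (eopp b).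

Definition ele (a b : ext R) : Prop :=
  match a, b with
  | NInf, _ => True
  | _, PInf => True
  | Fin x, Fin y => x <= y
  | _, _ => False
  end.

Definition elt (a b : ext R) : Prop :=
  match a, b with
  | NInf, NInf => False
  | NInf, _ => True
  | PInf, _ => False
  | Fin _, PInf => True
  | Fin x, Fin y => x < y
  | Fin _, NInf => False
  end.

(* real value of a finite extended real (0 on infinities; only used on finite values) *)
Definition fin (a : ext R) : R := match a with Fin x => x | _ => 0 end.

Definition fracpart (a : R) : R := a - (Num.floor a)%:~R.

Definition bound_const (K : nat) (c : ext R) : Prop :=
  c = NInf \/ c = PInf \/ exists z : int, (`|z| <= K%:Z) /\ c = Fin (z%:~R).

Definition esim (K : nat) (a b : ext R) : Prop :=
  forall c, bound_const K c ->
    (elt a c <-> elt b c) /\ (ele a c <-> ele b c).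

(* Clocks: a finite type X, partitioned into future clocks (XF x) and history
   clocks (~~ XF x).  The zero clock is implicit (v(0) = 0). *)
Definition valuation (X : finType) (XF : pred X) (v : X -> ext R) : Prop :=
  forall x, if XF x then ele (v x) (Fin 0) /\ v x <> PInf
            else ele (Fin 0) (v x) /\ v x <> NInf.

Definition vsim (X : finType) (M : nat) (v1 v2 : X -> ext R) : Prop :=
  (forall x, esim (#|X| * M) (v1 x) (v2 x)) /\
  (forall x y, esim (#|X|.+1 * M) (esub (v1 x) (v1 y)) (esub (v2 x) (v2 y))).
End Ext.

(* Main.v *)
Require Import Defs.
From mathcomp Require Import all_boot all_order all_algebra.
From mathcomp Require Import reals.
From mathcomp Require Import zify lra.
Import Order.TTheory GRing.Theory Num.Theory.
Local Open Scope ring_scope.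

Lemma esim_fin (R : realType) K (a : R) w : esim K (Fin a) w -> exists b, w = Fin b.
Proof.
move=> E.
have [H1 _] := E PInf (or_intror (or_introl erefl)).
have [_ H2] := E NInf (or_introl erefl).
clear E; case: w H1 H2 => [b||] H1 H2; first by exists b.
- by have := proj1 H1 I.
- by have := proj2 H2 I.
Qed.

Lemma esim_int (R : realType) K (a b : R) (z : int) :
  esim K (Fin a) (Fin b) -> (`|z| <= K%:Z)%R ->
  (a <= z%:~R <-> b <= z%:~R) /\ (z%:~R <= a <-> z%:~R <= b).
Proof.
move=> E hz; have [H1 H2] := E (Fin z%:~R) (or_intror (or_intror (ex_intro _ z (conj hz erefl)))).
split; first exact: H2.
rewrite !leNgt; split => /negP h; apply/negP => h'; apply: h; by apply H1.
Qed.

Arguments esim_int {R K a b z}.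

Lemma esim_mono (R : realType) K K' (a b : ext R) : (K <= K')%N -> esim K' a b -> esim K a b.
Proof.
move=> hK E c [->|[->|[z [hz ->]]]]; apply: E; [left|right;left|right;right]=>//.
exists z; split=>//; apply: (le_trans hz); by rewrite lez_nat.
Qed.

Lemma fl (R : realType) (M : nat) (a b : R) :
  - (M%:R) <= a -> a <= M%:R -> esim M (Fin a) (Fin b) ->
  Num.floor a = Num.floor b /\ (`|Num.floor a| <= M%:Z)%R.
Proof.
move=> h1 h2 E.
have hk : (`|Num.floor a| <= M%:Z)%R.
  rewrite ler_norml; apply/andP; split.
    by rewrite floor_ge_int rmorphN /=.
  have : Num.floor a < (M%:Z + 1) by rewrite floor_lt_int rmorphD /=; lra.
  by rewrite ltzD1.
split=>//.
set k := Num.floor a in hk *.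
have ka : k%:~R <= a by exact: floor_le.
have ak : a < (k + 1)%:~R by exact: floorD1_gt.
apply/esym/floor_def; apply/andP; split.
  by apply (proj2 (esim_int (E) hk)).
have [kM|kM] := ltP k M%:Z.
  have hk1 : (`|k + 1| <= M%:Z)%R.
    move: hk; rewrite !ler_norml => /andP[h h']; apply/andP; split; lia.
  have := proj2 (esim_int E hk1); rewrite !leNgt => h.
  apply/negPn/negP => hb; move: (proj2 h hb); by rewrite ak.
have kM' : k = M%:Z by move: hk; rewrite ler_norml => /andP[_ h]; lia.
have hM : (`|M%:Z| <= M%:Z)%R by [].
have := proj1 (proj1 (esim_int E hM)) h2.
rewrite kM' rmorphD /= => hb; lra.
Qed.

Arguments esim_fin {R K a w}.
Arguments esim_mono {R K K' a b}.
Arguments fl {R M a b}.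

Theorem lemma9 (R : realType) (X : finType) (XF : pred X) (M : nat)
  (v1 v2 : X -> ext R) (x y : X) :
  (1 <= #|X|)%N ->
  valuation XF v1 -> valuation XF v2 ->
  vsim M v1 v2 ->
  ele (Fin (- (M%:R : R))) (v1 x) -> ele (v1 x) (Fin (M%:R : R)) ->
  ele (Fin (- (M%:R : R))) (v1 y) -> ele (v1 y) (Fin (M%:R : R)) ->
  [/\ Num.floor (fin (v1 x)) = Num.floor (fin (v2 x)),
      (fracpart (fin (v1 x)) = 0 <-> fracpart (fin (v2 x)) = 0) &
      (fracpart (fin (v1 x)) <= fracpart (fin (v1 y))
         <-> fracpart (fin (v2 x)) <= fracpart (fin (v2 y)))].
Proof.
move=> n1 _ _ [S1 S2].
have KM : (M <= #|X| * M)%N by rewrite leq_pmull.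
have S2x := S2 x y.
have Sx := S1 x; have Sy := S1 y.
case E1: (v1 x) Sx S2x => [a||] // Sx S2x hx1 hx2.
case E2: (v1 y) Sy S2x => [a'||] // Sy S2x hy1 hy2.
have [b E3] := esim_fin Sx; have [b' E4] := esim_fin Sy.
rewrite E3 in Sx S2x; rewrite E4 in Sy S2x; rewrite E3 E4 /=.
have Sx' := esim_mono KM Sx; have Sy' := esim_mono KM Sy.
have [fx hkx] := fl hx1 hx2 Sx'.
have [fy hky] := fl hy1 hy2 Sy'.
rewrite /fracpart -fx -fy.
set k := Num.floor a in hkx fx *; set k' := Num.floor a' in hky fy *.
split=>//.
  have ka : k%:~R <= a by exact: floor_le.
  have kb : k%:~R <= b by rewrite fx; exact: floor_le.
  have [h _] := esim_int Sx' hkx.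
  split => e; have := h; lra.
have hK : (`|k - k'| <= (#|X|.+1 * M)%N%:Z)%R.
  move: hkx hky; rewrite !ler_norml => /andP[h1 h2] /andP[h3 h4]; apply/andP; split; nia.
have [h _] := esim_int S2x hK.
move: h; rewrite /= rmorphB /= => h.
split => e.
  have : a - a' <= k%:~R - k'%:~R by lra.
  move/h; lra.
have : b - b' <= k%:~R - k'%:~R by lra.
move/h; lra.
Qed.
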